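(* Assume $P$ is symmetric and transitive, and let $X_t=(\Phi^* )^t(I-J)$ for $t\ge0$. Then for every $t\ge0$: (1) $X_t\in\mathrm{Span}\{P^k,J:0\le k\le 2t\}$; in particular all diagonal entries of $X_t$ are equal, to a common value denoted $r_t$; (2) $X_{t+1}=P_qX_tP_q+q^2r_t\,(I-P^2)$.
   Context: $P$ is a row-stochastic $N\times N$ matrix, $q\in[0,1]$, $P_q=(1-q)I+qP$, $J=\mathbf 1\mathbf 1^\top/N$. $P$ is transitive if for every pair $(i,j)$ there is a permutation matrix $\Pi$ with $\Pi_{ij}=1$ and $\Pi P\Pi^{-1}=P$. $\beta_1,\dots,\beta_N$ are independent random variables in $\{1,\dots,N\}$ with $\mathbb P(\beta_i=j)=p_{ij}$, $e_i$ the standard basis vectors, $K=(1-q)I+q\sum_ie_ie_{\beta_i}^\top$, $\Phi(X)=\mathbb E[KXK^\top]$, and $\Phi^*$ is its adjoint with respect to $\langle A,B\rangle=\mathrm{Tr}(AB^\top)$; $(\Phi^* )^t$ is the $t$-fold composition. *)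

(* Defs.v *)
From mathcomp Require Import all_boot all_order all_fingroup all_algebra.
Set Implicit Arguments. Unset Strict Implicit. Unset Printing Implicit Defensive.
Import Order.TTheory GRing.Theory Num.Theory.
Local Open Scope ring_scope.

(* Matrices are N x N with N = n.+1 (so N >= 1 and J is well defined). *)
Section Defs.
Variables (R : realFieldType) (n : nat).
Local Notation N := n.+1.
Local Notation M := 'M[R]_N.

Definition row_stochastic (P : M) : Prop :=
  (forall i j, 0 <= P i j) /\ (forall i, \sum_j P i j = 1).

Definition symmetric_mx (P : M) : Prop := P^T = P.

Definition transitive_mx (P : M) : Prop :=
  forall i j : 'I_N, exists s : 'S_N,
    perm_mx (R:=R) s i j = 1 /\ perm_mx s *m P *m invmx (perm_mx s) = P.

Definition Pq (q : R) (P : M) : M := (1 - q) *: 1%:M + q *: P.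

Definition Jmx : M := (N%:R)^-1 *: const_mx 1.

Definition Kmx (q : R) (b : {ffun 'I_N -> 'I_N}) : M :=
  (1 - q) *: 1%:M + q *: \sum_i delta_mx i (b i).

(* probability of the outcome beta, beta_i independent with P(beta_i = j) = p_ij *)
Definition prob_beta (P : M) (b : {ffun 'I_N -> 'I_N}) : R :=
  \prod_i P i (b i).

Definition Phi (q : R) (P : M) (X : M) : M :=
  \sum_(b : {ffun 'I_N -> 'I_N}) prob_beta P b *: (Kmx q b *m X *m (Kmx q b)^T).

Definition PhiAdj (q : R) (P : M) (Y : M) : M :=
  \sum_(b : {ffun 'I_N -> 'I_N}) prob_beta P b *: ((Kmx q b)^T *m Y *m Kmx q b).

Definition Xt (q : R) (P : M) (t : nat) : M := iter t (PhiAdj q P) (1%:M - Jmx).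

Lemma PhiAdj_adjoint (q : R) (P X Y : M) :
  \tr (Phi q P X *m Y^T) = \tr (X *m (PhiAdj q P Y)^T).
Proof.
rewrite /Phi /PhiAdj !mulmx_suml raddf_sum /= linear_sum /= mulmx_sumr raddf_sum /=.
apply: eq_bigr => b _.
rewrite -!scalemxAl mxtraceZ linearZ /= -scalemxAr mxtraceZ; congr (_ * _).
rewrite !trmx_mul !trmxK !mulmxA mxtrace_mulC !mulmxA.
by rewrite -mulmxA mxtrace_mulC !mulmxA.
Qed.
End Defs.

(* Main.v *)
Require Import Defs.
From mathcomp Require Import all_boot all_order all_fingroup all_algebra.
From mathcomp Require Import ring zify.
Import Order.TTheory GRing.Theory Num.Theory.
Local Open Scope ring_scope.
Set Implicit Arguments. Unset Strict Implicit.

Lemma prod_two {R : realFieldType} {N} {a c : 'I_N} (F G : 'I_N -> R) : a != c ->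
  \prod_(i < N) (if i == a then F i else if i == c then G i else 1) = F a * G c.
Proof.
move=> ac. rewrite (bigD1 a) //= eqxx (bigD1 c) 1?eq_sym //= (negbTE ac) eqxx.
by rewrite big1 ?mulr1 // => i /andP[/negbTE -> /negbTE ->].
Qed.

Section L.
Variables (R : realFieldType) (n : nat).
Local Notation N := n.+1.
Local Notation M := 'M[R]_N.
Implicit Types (P Y : M).

Lemma expect_prod P (H : 'I_N -> 'I_N -> R) :
  \sum_(b : {ffun 'I_N -> 'I_N}) prob_beta P b * \prod_i H i (b i)
  = \prod_i \sum_j P i j * H i j.
Proof.
rewrite bigA_distr_bigA /=; apply: eq_bigr => b _.
by rewrite /prob_beta -big_split.
Qed.

Lemma prod_one_at (a : 'I_N) (x : R) :
  \prod_(i < N) (if i == a then x else 1) = x.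
Proof.
by rewrite (bigD1 a) //= eqxx big1 ?mulr1 // => i /negbTE ->.
Qed.

Lemma expect2 P (a c : 'I_N) (f g : 'I_N -> R) :
  (forall i, \sum_j P i j = 1) ->
  \sum_(b : {ffun 'I_N -> 'I_N}) prob_beta P b * (f (b a) * g (b c))
  = if a == c then \sum_x P a x * (f x * g x)
    else (\sum_x P a x * f x) * (\sum_x P c x * g x).
Proof.
move=> rs; case: eqP => [<-|/eqP ac]; last have ca : c != a by rewrite eq_sym.
  pose H := fun i j : 'I_N => if i == a then f j * g j else 1.
  transitivity (\sum_(b : {ffun 'I_N -> 'I_N}) prob_beta P b * \prod_i H i (b i)).
    apply: eq_bigr => b _; congr (_ * _).
    by rewrite /H /= (bigD1 a) //= eqxx big1 ?mulr1 // => i /negbTE ->.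
  rewrite (expect_prod P H) -[RHS](prod_one_at a) /H; apply: eq_bigr => i _ /=.
  by case: eqP => [->|_] //; under eq_bigr do rewrite mulr1; rewrite rs.
pose H := fun i j : 'I_N => if i == a then f j else if i == c then g j else 1.
transitivity (\sum_(b : {ffun 'I_N -> 'I_N}) prob_beta P b * \prod_i H i (b i)).
  apply: eq_bigr => b _; congr (_ * _).
  by rewrite /H /= prod_two.
rewrite (expect_prod P H).
rewrite -(prod_two (fun i => \sum_j P i j * f j) (fun i => \sum_j P i j * g j) ac).
apply: eq_bigr => i _; rewrite /H.
case: eqP => _ //; case: eqP => _ //.
by under eq_bigr do rewrite mulr1; rewrite rs.
Qed.

Lemma sum_delta_r P (a j : 'I_N) : \sum_x P a x * (x == j)%:R = P a j.
Proof.
by rewrite (bigD1 j) //= eqxx mulr1 big1 ?addr0 // => x /negbTE ->; rewrite mulr0.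
Qed.

Lemma sum_delta2_r P (a j l : 'I_N) :
  \sum_x P a x * (x == j)%:R * (x == l)%:R = (j == l)%:R * P a j.
Proof.
rewrite (bigD1 j) //= eqxx mulr1 big1 ?addr0; first by rewrite mulrC.
by move=> x /negbTE ->; rewrite mulr0 mul0r.
Qed.

Lemma kmean P (a j : 'I_N) (al be : R) : (forall i, \sum_j P i j = 1) ->
  \sum_x P a x * (al + be * (x == j)%:R) = al + be * P a j.
Proof.
move=> rs.
transitivity (\sum_x (al * P a x + be * (P a x * (x == j)%:R))).
  by apply: eq_bigr => x _; ring.
by rewrite big_split /= -!mulr_sumr rs sum_delta_r mulr1.
Qed.

Lemma kvar P (a j l : 'I_N) (al be ga de : R) : (forall i, \sum_j P i j = 1) ->
  \sum_x P a x * ((al + be * (x == j)%:R) * (ga + de * (x == l)%:R))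
  = al * ga + al * de * P a l + be * ga * P a j + be * de * ((j == l)%:R * P a j).
Proof.
move=> rs.
transitivity (\sum_x (al * ga * P a x + al * de * (P a x * (x == l)%:R)
   + be * ga * (P a x * (x == j)%:R) + be * de * (P a x * (x == j)%:R * (x == l)%:R))).
  by apply: eq_bigr => x _; ring.
rewrite !big_split /= -!mulr_sumr rs !sum_delta_r sum_delta2_r mulr1 //.
Qed.

Lemma KmxE (q : R) (b : {ffun 'I_N -> 'I_N}) (a j : 'I_N) :
  Kmx q b a j = (1 - q) * (a == j)%:R + q * (b a == j)%:R.
Proof.
rewrite /Kmx !mxE summxE; congr (_ + _ * _).
rewrite (bigD1 a) //= !mxE eqxx /= big1 ?addr0; first by rewrite eq_sym.
by move=> i /negbTE ia; rewrite mxE eq_sym ia.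
Qed.

Lemma PqE (q : R) P (a j : 'I_N) : Pq q P a j = (1 - q) * (a == j)%:R + q * P a j.
Proof. by rewrite /Pq !mxE. Qed.

Lemma PhiAdj_step (q : R) P Y : (forall i, \sum_j P i j = 1) -> symmetric_mx P ->
  (forall i, Y i i = Y ord0 ord0) ->
  PhiAdj q P Y = Pq q P *m Y *m Pq q P + (q ^+ 2 * Y ord0 ord0) *: (1%:M - P ^+ 2).
Proof.
move=> rs sym dY; apply/matrixP => j l.
set r := Y ord0 ord0.
have symE : forall i k, P k i = P i k.
  by move=> i k; rewrite -[in LHS]sym mxE.
pose kf (a j : 'I_N) (x : 'I_N) := (1 - q) * (a == j)%:R + q * (x == j)%:R.
have E1 : forall b, ((Kmx q b)^T *m Y *m Kmx q b) j l
    = \sum_c \sum_a Y a c * (kf a j (b a) * kf c l (b c)).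
  move=> b; rewrite mxE; apply: eq_bigr => c _; rewrite mxE big_distrl /=.
  by apply: eq_bigr => a _; rewrite [(_^T) _ _]mxE !KmxE /kf; ring.
pose T := \sum_c \sum_a Y a c * (Pq q P a j * Pq q P c l)
   + \sum_c Y c c * (q ^+ 2 * ((j == l)%:R * P c j - P c j * P c l)).
transitivity T.
  transitivity (\sum_c \sum_a Y a c * \sum_(b : {ffun 'I_N -> 'I_N}) prob_beta P b * (kf a j (b a) * kf c l (b c))).
    rewrite /PhiAdj summxE.
    transitivity (\sum_(b : {ffun 'I_N -> 'I_N}) \sum_c \sum_a prob_beta P b * (Y a c * (kf a j (b a) * kf c l (b c)))).
      apply: eq_bigr => b _; rewrite mxE E1 mulr_sumr; apply: eq_bigr => c _.
      by rewrite mulr_sumr.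
    rewrite exchange_big; apply: eq_bigr => c _; rewrite exchange_big.
    apply: eq_bigr => a _; rewrite mulr_sumr; apply: eq_bigr => b _; ring.
  rewrite /T -big_split; apply: eq_bigr => c _.
  rewrite /= (bigD1 c) //= [X in _ = X + _](bigD1 c) //=.
  have -> : \sum_(a < N | a != c) Y a c * \sum_(b : {ffun 'I_N -> 'I_N}) prob_beta P b * (kf a j (b a) * kf c l (b c))
     = \sum_(a < N | a != c) Y a c * (Pq q P a j * Pq q P c l).
    apply: eq_bigr => a ac; rewrite expect2 // (negbTE ac) /kf !kmean // !PqE.
    done.
  rewrite expect2 // eqxx /kf kvar // !PqE.
  rewrite dY /r; ring.
have PqS : forall a b, Pq q P a b = Pq q P b a.
  by move=> a b; rewrite !PqE symE eq_sym.
rewrite /T [in RHS]mxE; congr (_ + _).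
  rewrite [in RHS]mxE; apply: eq_bigr => c _; rewrite [in RHS]mxE big_distrl /=.
  by apply: eq_bigr => a _; rewrite (PqS j a); ring.
rewrite !mxE.
transitivity (\sum_c q ^+ 2 * r * ((j == l)%:R * P j c - P j c * P c l)).
  apply: eq_bigr => c _.
  by rewrite dY (symE c j) /r; ring.
by rewrite -mulr_sumr sumrB -mulr_sumr rs mulr1.
Qed.

Lemma JE (i j : 'I_N) : (@Jmx R n) i j = (N%:R)^-1.
Proof. by rewrite /Jmx !mxE mulr1. Qed.

Lemma sum_deltaC (i : 'I_N) : \sum_(k < N) ((i == k)%:R : R) = 1.
Proof.
by rewrite (bigD1 i) //= eqxx big1 ?addr0 // => k /negbTE; rewrite eq_sym => ->.
Qed.

Lemma Pq_rowsum (q : R) P : (forall i, \sum_j P i j = 1) ->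
  forall i, \sum_k Pq q P i k = 1.
Proof.
move=> rs i; under eq_bigr do rewrite PqE.
by rewrite big_split /= -!mulr_sumr sum_deltaC rs !mulr1 subrK.
Qed.

Lemma PqJPq (q : R) P : (forall i, \sum_j P i j = 1) -> symmetric_mx P ->
  Pq q P *m @Jmx R n *m Pq q P = @Jmx R n.
Proof.
move=> rs sym; have symE : forall i k, P k i = P i k.
  by move=> i k; rewrite -[in LHS]sym mxE.
apply/matrixP => i j; rewrite mxE.
under eq_bigr do rewrite mxE.
transitivity (\sum_k (N%:R)^-1 * Pq q P j k).
  apply: eq_bigr => k _.
  rewrite (eq_bigr (fun a => Pq q P i a * (N%:R)^-1)); last by move=> a _; rewrite JE.
  rewrite -mulr_suml Pq_rowsum // mul1r !PqE symE eq_sym //.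
by rewrite -mulr_sumr Pq_rowsum // mulr1 JE.
Qed.

Lemma perm_mxE' (s : 'S_N) (i j : 'I_N) : perm_mx (R:=R) s i j = (s i == j)%:R.
Proof. by rewrite /perm_mx !mxE. Qed.

Lemma diag_comm (A : M) (s : 'S_N) : perm_mx s *m A = A *m perm_mx s ->
  forall i, A (s i) (s i) = A i i.
Proof.
move=> H i; have := congr1 (fun B : M => B i (s i)) H; rewrite /= !mxE.
rewrite (bigD1 (s i)) //= perm_mxE' eqxx mul1r big1 ?addr0; last first.
  by move=> k /negbTE sk; rewrite perm_mxE' eq_sym sk mul0r.
rewrite (bigD1 i) //= perm_mxE' eqxx mulr1 big1 ?addr0 //.
by move=> k /negbTE ki; rewrite perm_mxE' (inj_eq perm_inj) ki mulr0.
Qed.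

Lemma horner_diag P (p : {poly R}) : transitive_mx P ->
  forall i, horner_mx P p i i = horner_mx P p ord0 ord0.
Proof.
move=> tr i; have [s [s1 Hs]] := tr i ord0.
have si : s i = ord0.
  apply/eqP; move: s1; rewrite perm_mxE'; case: (s i == ord0) => //.
  by move/eqP; rewrite eq_sym oner_eq0.
have cP : comm_mx (perm_mx s) P.
  rewrite /comm_mx -{2}Hs -!mulmxA mulVmx ?mulmx1 //; exact: unitmx_perm.
have := comm_mx_horner p cP => /diag_comm => /(_ i); rewrite si => ->.
done.
Qed.

Lemma horner_sum P (p : {poly R}) m : (size p <= m)%N ->
  horner_mx P p = \sum_(k < m) p`_k *: P ^+ k.
Proof.
move=> sp.
have E : p = \poly_(i < m) p`_i.
  apply/polyP => k; rewrite coef_poly; case: ltnP => // km.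
  by rewrite nth_default // (leq_trans sp km).
rewrite [in LHS]E poly_def linear_sum; apply: eq_bigr => k _.
by rewrite linearZ /= rmorphXn /= horner_mx_X.
Qed.

Lemma addscE (A B : M) (d : R) (i j : 'I_N) : (A + d *: B) i j = A i j + d * B i j.
Proof. by rewrite !mxE. Qed.

Lemma inv_step (q : R) P : (forall i, \sum_j P i j = 1) -> symmetric_mx P -> transitive_mx P ->
  forall t, exists p : {poly R}, (size p <= (2 * t).+1)%N /\
    exists d, Xt q P t = horner_mx P p + d *: @Jmx R n.
Proof.
move=> rs sym tr; elim=> [|t [p [sp [d Ht]]]].
  exists 1; split; first by rewrite size_poly1.
  by exists (-1); rewrite /Xt /= scaleN1r; congr (_ + _); rewrite (rmorph1 (horner_mx P)).
set r := Xt q P t ord0 ord0.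
have dX : forall i, Xt q P t i i = r.
  by move=> i; rewrite /r Ht !addscE horner_diag // !JE.
pose pq : {poly R} := (1 - q)%:P + q%:P * 'X.
have hpq : horner_mx P pq = Pq q P.
  by rewrite rmorphD rmorphM /= !horner_mx_C horner_mx_X /Pq scalemx1 -mulmxE mul_scalar_mx.
have szpq : (size pq <= 2)%N.
  apply: leq_trans (size_polyD _ _) _; rewrite geq_max.
  rewrite (leq_trans (size_polyC_leq1 _)) //=.
  apply: leq_trans (size_polyMleq _ _) _; rewrite size_polyX; have := size_polyC_leq1 q; lia.
exists (pq * p * pq + (q ^+ 2 * r) *: (1 - 'X^2)); split.
  apply: leq_trans (size_polyD _ _) _; rewrite geq_max; apply/andP; split.
    have h1 := size_polyMleq pq p; have h2 := size_polyMleq (pq * p) pq; lia.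
  apply: leq_trans (size_scale_leq _ _) _.
  apply: leq_trans (size_polyD _ _) _; rewrite size_polyN size_polyXn size_poly1.
  rewrite /maxn /=; lia.
exists d.
have -> : Xt q P t.+1 = PhiAdj q P (Xt q P t) by [].
rewrite PhiAdj_step // -/r Ht (mulmxDr (Pq q P)) (mulmxDl _ _ (Pq q P)) -(scalemxAr d (Pq q P)) -(scalemxAl d _ (Pq q P)) PqJPq //.
rewrite rmorphD /= horner_mxZ !rmorphM /= hpq rmorphB /= rmorphXn /= horner_mx_X.
rewrite -!mulmxE addrAC; congr (_ + _ + _).
by rewrite (rmorph1 (horner_mx P)).
Qed.

End L.

Theorem lemma2 (R : realFieldType) (n : nat) (P : 'M[R]_n.+1) (q : R) :
  row_stochastic P -> 0 <= q <= 1 ->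
  symmetric_mx P -> transitive_mx P ->
  forall t : nat,
    [/\ (exists (c : 'I_(2 * t).+1 -> R) (d : R),
           Xt q P t = \sum_(k < (2 * t).+1) c k *: P ^+ k + d *: @Jmx R n),
        (exists r : R, forall i, Xt q P t i i = r) &
        Xt q P t.+1 = Pq q P *m Xt q P t *m Pq q P
                      + (q ^+ 2 * Xt q P t ord0 ord0) *: (1%:M - P ^+ 2)].
Proof.
move=> [_ rs] _ sym tr t.
have [p [sp [d Ht]]] := inv_step q rs sym tr t.
have dX : forall i, Xt q P t i i = Xt q P t ord0 ord0.
  by move=> i; rewrite Ht !addscE horner_diag // !JE.
split.
- by exists (fun k => p`_k), d; rewrite Ht (horner_sum P sp).
- by exists (Xt q P t ord0 ord0).
- by rewrite [Xt q P t.+1]/= PhiAdj_step.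
Qed.
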